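(* Suppose $p=2p_1$, $q=2q_1$, $r=2r_1$ are all even, and let $H$ be the quotient of $W(p,q,r)$ by the normal subgroup generated by $\big((s_1s_3)^{q_1}(s_1s_2)^{p_1}(s_2s_3)^{r_1}\big)^2$. Then for every reflection representation $R$ of $W(p,q,r)$ (any admissible parameters) with $\Delta=0$, $R$ factors through $H$; in particular $G=R(W)$ is isomorphic to a quotient of $H$.
   Context: Setting. Let $p,q,r\ge 3$ be integers and $W=W(p,q,r)$ the Coxeter group with generators $s_1,s_2,s_3$ and relations $s_i^2=1$, $(s_1s_2)^p=(s_1s_3)^q=(s_2s_3)^r=1$. Let $\alpha=4\cos^2(\pi k_1/p)$, $\beta=4\cos^2(\pi k_2/q)$, $\gamma=4\cos^2(\pi k_3/r)$ with $\gcd(k_1,p)=\gcd(k_2,q)=\gcd(k_3,r)=1$ (so $0<\alpha,\beta,\gamma<4$), and let $l,m\in\mathbb{C}$ with $lm=\gamma$. Let $K\subset\mathbb{C}$ be a field containing $\alpha,\beta,\gamma,l,m$, and $M$ a $3$-dimensional $K$-vector space with basis $(a_1,a_2,a_3)$. The reflection representation $R:W\to GL(M)$ with parameters $(\alpha,\beta,\gamma;l,m)$ is defined by: for $x=\lambda_1a_1+\lambda_2a_2+\lambda_3a_3$, $R(s_1)x=x-(2\lambda_1-\alpha\lambda_2-\beta\lambda_3)a_1$, $R(s_2)x=x-(-\lambda_1+2\lambda_2-l\lambda_3)a_2$, $R(s_3)x=x-(-\lambda_1-m\lambda_2+2\lambda_3)a_3$. Put $G=R(W)$ and write $s_i$ for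 $R(s_i)$. Let $\Delta=8-2\alpha-2\beta-2\gamma-(\alpha l+\beta m)$; $R$ is reducible iff $\Delta=0$. *)

(* Defs.v *)
From HB Require Import structures.
From mathcomp Require Import all_boot all_order all_algebra.
Set Implicit Arguments. Unset Strict Implicit. Unset Printing Implicit Defensive.
Import Order.TTheory GRing.Theory Num.Theory.
Local Open Scope ring_scope.

(* The coefficient matrix B of the reflection representation with parameters
   (alpha, beta, gamma; l, m): row i of B is the linear form x |-> c_i(x) with
   R(s_i) x = x - c_i(x) a_i, in coordinates (lambda_1, lambda_2, lambda_3):
     c_1 = 2 l1 - alpha l2 - beta l3
     c_2 = - l1 + 2 l2 - l l3
     c_3 = - l1 - m l2 + 2 l3                                               *)
Definition refl_form (R : ringType) (alpha beta l m : R) : 'M[R]_3 :=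
  \matrix_(i < 3, j < 3)
    nth 0 (nth [::] [:: [:: 2; - alpha; - beta];
                        [:: -1; 2; - l];
                        [:: -1; - m; 2]] i) j.

Definition refl_gen (R : ringType) (alpha beta l m : R) (i : 'I_3) : 'M[R]_3 :=
  1%:M - delta_mx i i *m refl_form alpha beta l m.

Definition s1 (R : ringType) (alpha beta l m : R) := refl_gen alpha beta l m (inord 0).
Definition s2 (R : ringType) (alpha beta l m : R) := refl_gen alpha beta l m (inord 1).
Definition s3 (R : ringType) (alpha beta l m : R) := refl_gen alpha beta l m (inord 2).

Definition Delta (R : ringType) (alpha beta gamma l m : R) : R :=
  8 - 2 * alpha - 2 * beta - 2 * gamma - (alpha * l + beta * m).

(* Main.v *)
Require Import Defs.
From HB Require Import structures.
From mathcomp Require Import all_boot all_order all_algebra.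
From mathcomp Require Import ring zify.
Import Order.TTheory GRing.Theory Num.Theory.
Local Open Scope ring_scope.
Section M3.
Variable K : fieldType.
Definition mk3 (a b c d e f g h i : K) : 'M[K]_3 :=
  \matrix_(r < 3, s < 3) nth 0 (nth [::] [:: [:: a; b; c]; [:: d; e; f]; [:: g; h; i]] r) s.

Lemma mx3P (A : 'M[K]_3) a b c d e f g h i :
  A (inord 0) (inord 0) = a -> A (inord 0) (inord 1) = b -> A (inord 0) (inord 2) = c ->
  A (inord 1) (inord 0) = d -> A (inord 1) (inord 1) = e -> A (inord 1) (inord 2) = f ->
  A (inord 2) (inord 0) = g -> A (inord 2) (inord 1) = h -> A (inord 2) (inord 2) = i ->
  A = mk3 a b c d e f g h i.
Proof.
move=> ? ? ? ? ? ? ? ? ?; apply/matrixP => r s; rewrite !mxE.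
have -> : r = inord r by apply/val_inj; rewrite /= inordK.
have -> : s = inord s by apply/val_inj; rewrite /= inordK.
case: r s => [[|[|[|r]]] hr] // [[|[|[|s]]] hs] //=; rewrite ?inordK //.
Qed.

Lemma mul3 a b c d e f g h i a' b' c' d' e' f' g' h' i' :
  mk3 a b c d e f g h i *m mk3 a' b' c' d' e' f' g' h' i' =
  mk3 (a*a'+b*d'+c*g') (a*b'+b*e'+c*h') (a*c'+b*f'+c*i')
      (d*a'+e*d'+f*g') (d*b'+e*e'+f*h') (d*c'+e*f'+f*i')
      (g*a'+h*d'+i*g') (g*b'+h*e'+i*h') (g*c'+h*f'+i*i').
Proof.
apply/matrixP => r s; rewrite !mxE !big_ord_recr big_ord0 /= !mxE /= add0r.
case: r s => [[|[|[|r]]] hr] // [[|[|[|s]]] hs] //=.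
Qed.

Lemma add3 a b c d e f g h i a' b' c' d' e' f' g' h' i' :
  mk3 a b c d e f g h i + mk3 a' b' c' d' e' f' g' h' i' =
  mk3 (a+a') (b+b') (c+c') (d+d') (e+e') (f+f') (g+g') (h+h') (i+i').
Proof.
apply/matrixP => r s; rewrite !mxE.
case: r s => [[|[|[|r]]] hr] // [[|[|[|s]]] hs] //=.
Qed.

Lemma opp3 a b c d e f g h i :
  - mk3 a b c d e f g h i = mk3 (-a) (-b) (-c) (-d) (-e) (-f) (-g) (-h) (-i).
Proof.
apply/matrixP => r s; rewrite !mxE.
case: r s => [[|[|[|r]]] hr] // [[|[|[|s]]] hs] //=.
Qed.

Lemma scale3 k a b c d e f g h i :
  k *: mk3 a b c d e f g h i = mk3 (k*a) (k*b) (k*c) (k*d) (k*e) (k*f) (k*g) (k*h) (k*i).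
Proof.
apply/matrixP => r s; rewrite !mxE.
case: r s => [[|[|[|r]]] hr] // [[|[|[|s]]] hs] //=.
Qed.

Lemma scalar3 k : k%:M = mk3 k 0 0 0 k 0 0 0 k :> 'M[K]_3.
Proof.
apply/matrixP => r s; rewrite !mxE.
case: r s => [[|[|[|r]]] hr] // [[|[|[|s]]] hs] //=.
Qed.

Lemma s1E (a b l m : K) : s1 a b l m = mk3 (-1) a b 0 1 0 0 0 1.
Proof.
apply: mx3P; rewrite /s1 /refl_gen !mxE !big_ord_recr big_ord0 /= !mxE /= !inordK //=.
all: by rewrite -!val_eqE /= ?inordK //=; ring.
Qed.

Lemma s2E (a b l m : K) : s2 a b l m = mk3 1 0 0 1 (-1) l 0 0 1.
Proof.
apply: mx3P; rewrite /s2 /refl_gen !mxE !big_ord_recr big_ord0 /= !mxE /= !inordK //=.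
all: by rewrite -!val_eqE /= ?inordK //=; ring.
Qed.

Lemma s3E (a b l m : K) : s3 a b l m = mk3 1 0 0 0 1 0 1 m (-1).
Proof.
apply: mx3P; rewrite /s3 /refl_gen !mxE !big_ord_recr big_ord0 /= !mxE /= !inordK //=.
all: by rewrite -!val_eqE /= ?inordK //=; ring.
Qed.

Lemma pow_lag (T A B C : 'M[K]_3) z n : z != 0 -> T *m A = A -> T *m B = z *: B ->
  T *m C = z^-1 *: C -> A + B + C = 1%:M -> T ^+ n = A + z ^+ n *: B + z ^- n *: C.
Proof.
move=> z0 hA hB hC h1; elim: n => [|n IH].
  by rewrite !expr0 invr1 !scale1r h1.
rewrite exprS IH -mulmxE !mulmxDr -!scalemxAr hA hB hC !scalerA -exprSr.
by rewrite exprSr invfM.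
Qed.

Lemma pow_P (T A B C : 'M[K]_3) z n : z != 0 -> T *m A = A -> T *m B = z *: B ->
  T *m C = z^-1 *: C -> A + B + C = 1%:M -> z ^+ n = -1 -> T ^+ n = A + A - 1%:M.
Proof.
move=> z0 hA hB hC h1 hz; rewrite (@pow_lag T A B C z n z0 hA hB hC h1) hz invrN invr1 !scaleN1r.
by rewrite -h1 !opprD !addrA addrK.
Qed.

Lemma pow12 (z l m b : K) (p : nat) : z != 0 -> z - 1 != 0 -> z + 1 != 0 -> z^+p = -1 ->
  (s1 (2 + z + z^-1) b l m *m s2 (2 + z + z^-1) b l m) ^+ p =
  mk3 (-1) 0 (2*((2*b+(2 + z + z^-1) * l)/(4-(2 + z + z^-1)))) 0 (-1)
      (2*((b+2 * l)/(4-(2 + z + z^-1)))) 0 0 1.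
Proof.
move=> z0 z1 z2 hp; rewrite s1E s2E.
have e1 : z * z - 1 != 0.
  by rewrite (_ : z * z - 1 = (z - 1) * (z + 1)); [rewrite mulf_neq0 | ring].
have e2 : 1 + - z * z != 0.
  by rewrite (_ : 1 + - z * z = - (z * z - 1)); [rewrite oppr_eq0 | ring].
have e3 : 1 + -1 * z != 0.
  by rewrite (_ : 1 + -1 * z = - (z - 1)); [rewrite oppr_eq0 | ring].
have e4 : - (z - 1) ^+ 2 != 0 by rewrite oppr_eq0 expf_neq0.
have h4 : 4 - (2 + z + z^-1) = - (z - 1)^+2 / z by field.
rewrite h4.
rewrite (@pow_P _ (mk3 0 0 ((2*b+(2 + z + z^-1) * l)/(- (z - 1)^+2 / z)) 0 0 ((b+2 * l)/(- (z - 1)^+2 / z)) 0 0 1)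
  (((z-1)*(z-z^-1))^-1 *: ((mk3 (-1) (2 + z + z^-1) b 0 1 0 0 0 1 *m mk3 1 0 0 1 (-1) l 0 0 1 - 1%:M) *m
       (mk3 (-1) (2 + z + z^-1) b 0 1 0 0 0 1 *m mk3 1 0 0 1 (-1) l 0 0 1 - z^-1%:M)))
  (((z^-1-1)*(z^-1-z))^-1 *: ((mk3 (-1) (2 + z + z^-1) b 0 1 0 0 0 1 *m mk3 1 0 0 1 (-1) l 0 0 1 - 1%:M) *m
       (mk3 (-1) (2 + z + z^-1) b 0 1 0 0 0 1 *m mk3 1 0 0 1 (-1) l 0 0 1 - z%:M))) z p z0).
all: try exact hp.
all: rewrite !(scalar3, mul3, opp3, add3, scale3); congr mk3; field.
all: by rewrite ?z0 ?z1 ?e1 ?e2 ?e3 ?e4.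
Qed.
Lemma pow13 (z l m a : K) (p : nat) : z != 0 -> z - 1 != 0 -> z + 1 != 0 -> z^+p = -1 ->
  (s1 a (2 + z + z^-1) l m *m s3 a (2 + z + z^-1) l m) ^+ p =
  mk3 (-1) (2*((2*a+(2 + z + z^-1) * m)/(4-(2 + z + z^-1)))) 0 0 1 0
      0 (2*((a+2 * m)/(4-(2 + z + z^-1)))) (-1).
Proof.
move=> z0 z1 z2 hp; rewrite s1E s3E.
have e1 : z * z - 1 != 0.
  by rewrite (_ : z * z - 1 = (z - 1) * (z + 1)); [rewrite mulf_neq0 | ring].
have e2 : 1 + - z * z != 0.
  by rewrite (_ : 1 + - z * z = - (z * z - 1)); [rewrite oppr_eq0 | ring].
have e3 : 1 + -1 * z != 0.
  by rewrite (_ : 1 + -1 * z = - (z - 1)); [rewrite oppr_eq0 | ring].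
have e4 : - (z - 1) ^+ 2 != 0 by rewrite oppr_eq0 expf_neq0.
have h4 : 4 - (2 + z + z^-1) = - (z - 1)^+2 / z by field.
rewrite h4.
rewrite (@pow_P _ (mk3 0 ((2*a+(2 + z + z^-1) * m)/(- (z - 1)^+2 / z)) 0 0 1 0 0 ((a+2 * m)/(- (z - 1)^+2 / z)) 0)
  (((z-1)*(z-z^-1))^-1 *: ((mk3 (-1) a (2 + z + z^-1) 0 1 0 0 0 1 *m mk3 1 0 0 0 1 0 1 m (-1) - 1%:M) *m
       (mk3 (-1) a (2 + z + z^-1) 0 1 0 0 0 1 *m mk3 1 0 0 0 1 0 1 m (-1) - z^-1%:M)))
  (((z^-1-1)*(z^-1-z))^-1 *: ((mk3 (-1) a (2 + z + z^-1) 0 1 0 0 0 1 *m mk3 1 0 0 0 1 0 1 m (-1) - 1%:M) *m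
       (mk3 (-1) a (2 + z + z^-1) 0 1 0 0 0 1 *m mk3 1 0 0 0 1 0 1 m (-1) - z%:M))) z p z0).
all: try exact hp.
all: rewrite !(scalar3, mul3, opp3, add3, scale3); congr mk3; field.
all: by rewrite ?z0 ?z1 ?e1 ?e2 ?e3 ?e4.
Qed.
Lemma pow23 (z l m a b : K) (p : nat) : l * m = 2 + z + z^-1 -> z != 0 -> z - 1 != 0 -> z + 1 != 0 -> z^+p = -1 ->
  (s2 a b l m *m s3 a b l m) ^+ p =
  mk3 1 0 0 (2*((2+l)/(4 - l * m))) (-1) 0 (2*((2+m)/(4 - l * m))) 0 (-1).
Proof.
move=> hlm z0 z1 z2 hp; rewrite s2E s3E.
have l0 : l != 0.
  apply/eqP => l0; move: hlm; rewrite l0 mul0r => /eqP; apply/negP.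
  rewrite (_ : 2 + z + z^-1 = (z + 1) ^+ 2 / z); last by field.
  by rewrite eq_sym mulf_neq0 ?invr_eq0 ?expf_neq0.
have hm : m = (2 + z + z^-1) / l by rewrite -hlm; field.
rewrite hlm; subst m.
have e1 : z * z - 1 != 0.
  by rewrite (_ : z * z - 1 = (z - 1) * (z + 1)); [rewrite mulf_neq0 | ring].
have e2 : 1 + - z * z != 0.
  by rewrite (_ : 1 + - z * z = - (z * z - 1)); [rewrite oppr_eq0 | ring].
have e3 : 1 + -1 * z != 0.
  by rewrite (_ : 1 + -1 * z = - (z - 1)); [rewrite oppr_eq0 | ring].
have e4 : - (z - 1) ^+ 2 != 0 by rewrite oppr_eq0 expf_neq0.
have h4 : 4 - (2 + z + z^-1) = - (z - 1)^+2 / z by field.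
rewrite h4.
rewrite (@pow_P _ (mk3 1 0 0 ((2+l)/(- (z - 1)^+2 / z)) 0 0 ((2+(2 + z + z^-1)/l)/(- (z - 1)^+2 / z)) 0 0)
  (((z-1)*(z-z^-1))^-1 *: ((mk3 1 0 0 1 (-1) l 0 0 1 *m mk3 1 0 0 0 1 0 1 ((2 + z + z^-1)/l) (-1) - 1%:M) *m
       (mk3 1 0 0 1 (-1) l 0 0 1 *m mk3 1 0 0 0 1 0 1 ((2 + z + z^-1)/l) (-1) - z^-1%:M)))
  (((z^-1-1)*(z^-1-z))^-1 *: ((mk3 1 0 0 1 (-1) l 0 0 1 *m mk3 1 0 0 0 1 0 1 ((2 + z + z^-1)/l) (-1) - 1%:M) *m
       (mk3 1 0 0 1 (-1) l 0 0 1 *m mk3 1 0 0 0 1 0 1 ((2 + z + z^-1)/l) (-1) - z%:M))) z p z0).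
all: try exact hp.
all: rewrite !(scalar3, mul3, opp3, add3, scale3); congr mk3; field.
all: by rewrite ?z0 ?z1 ?e1 ?e2 ?e3 ?e4 ?l0.
Qed.
End M3.
Arguments mk3 {K}.
Lemma final (K : numFieldType) (a b l m : K) : 4 - a != 0 -> 4 - b != 0 -> 4 - l * m != 0 ->
  Delta a b (l * m) l m = 0 ->
  (mk3 (-1) (2*((2*a+b * m)/(4-b))) 0 0 1 0 0 (2*((a+2 * m)/(4-b))) (-1) *m
   mk3 (-1) 0 (2*((2*b+a * l)/(4-a))) 0 (-1) (2*((b+2 * l)/(4-a))) 0 0 1 *m
   mk3 1 0 0 (2*((2+l)/(4 - l * m))) (-1) 0 (2*((2+m)/(4 - l * m))) 0 (-1)) ^+ 2 = 1%:M.
Proof.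
move=> ha hb hg hD.
have [hm|hm] := eqVneq (2 * m + a) 0.
  exfalso; have ha' : a = - (2 * m) by apply/eqP; rewrite -addr_eq0 addrC hm.
  move: hD ha; rewrite /Delta ha' => /eqP hD ha; move: hD; apply/negP.
  rewrite (_ : _ - _ = (4 - - (2 * m)) * (4 - b) / 2); last by field.
  by rewrite !mulf_neq0 ?invr_eq0 ?pnatr_eq0.
have hl : l = (8 - 2 * a - 2 * b - b * m) / (2 * m + a).
  apply: (mulIf hm); rewrite mulfVK //; move: hD; rewrite /Delta => hD.
  by apply/eqP; rewrite -subr_eq0 -oppr_eq0 -[X in _ == X]hD; apply/eqP; ring.
subst l.
have hg' : 4 * (2 * m + a) - (8 - 2 * a - 2 * b - b * m) * m != 0.
  move: hg; rewrite (_ : 4 - _ = (4 * (2 * m + a) - (8 - 2 * a - 2 * b - b * m) * m) / (2 * m + a)).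
    by rewrite mulf_eq0 negb_or => /andP[].
  by field.
rewrite expr2 -mulmxE !mul3 !scalar3; congr mk3; field.
all: by rewrite ?ha ?hb ?hm ?hg'.
Qed.

Lemma prim_facts (K : fieldType) n (z : K) : (2 <= n)%N -> (2 * n)%N.-primitive_root z ->
  [/\ z != 0, z - 1 != 0, z + 1 != 0 & z ^+ n = -1].
Proof.
move=> hn hz.
have h1 := prim_expr_order hz.
have hd i : (z ^+ i == 1) = (2 * n %| i)%N by rewrite (prim_order_dvd hz).
have z0 : z != 0.
  apply/eqP => z0; move: h1; rewrite z0 expr0n.
  have -> : (2 * n == 0)%N = false by apply/negbTE; lia.
  by move/eqP; rewrite eq_sym oner_eq0.
split => //.
- rewrite subr_eq0; apply/negP => /eqP e; move: (hd 1%N); rewrite expr1 e eqxx => /esym.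
  by move/dvdn_leq => /(_ isT); lia.
- rewrite addr_eq0; apply/negP => /eqP e; move: (hd 2%N); rewrite e sqrrN expr1n eqxx => /esym.
  by move/dvdn_leq => /(_ isT); lia.
- have : (z ^+ n) ^+ 2 == 1 by rewrite -exprM mulnC h1.
  rewrite sqrf_eq1 => /orP[|/eqP //].
  rewrite hd => /dvdn_leq.
  have -> : (0 < n)%N by lia.
  by move=> /(_ isT); lia.
Qed.

Lemma four_ne (K : fieldType) (z : K) : z != 0 -> z - 1 != 0 -> 4 - (2 + z + z^-1) != 0.
Proof.
move=> z0 z1; rewrite (_ : 4 - _ = - (z - 1) ^+ 2 / z); last by field.
by rewrite mulf_neq0 ?oppr_eq0 ?expf_neq0 ?invr_eq0.
Qed.

Theorem corollary3 (K : numClosedFieldType) (p1 q1 r1 : nat)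
    (hp : (2 <= p1)%N) (hq : (2 <= q1)%N) (hr : (2 <= r1)%N)
    (z1 z2 z3 l m : K)
    (hz1 : (2 * p1)%N.-primitive_root z1)
    (hz2 : (2 * q1)%N.-primitive_root z2)
    (hz3 : (2 * r1)%N.-primitive_root z3)
    (hlm : l * m = 2 + z3 + z3^-1)
    (hDelta : Delta (2 + z1 + z1^-1) (2 + z2 + z2^-1) (2 + z3 + z3^-1) l m = 0) :
  let alpha := 2 + z1 + z1^-1 in
  let beta := 2 + z2 + z2^-1 in
  let S1 := s1 alpha beta l m in
  let S2 := s2 alpha beta l m in
  let S3 := s3 alpha beta l m in
  ((S1 *m S3) ^+ q1 *m (S1 *m S2) ^+ p1 *m (S2 *m S3) ^+ r1) ^+ 2 = 1%:M.
Proof.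
move=> alpha beta S1 S2 S3; rewrite /S1 /S2 /S3 /alpha /beta.
have [a0 a1 a2 ap] := @prim_facts _ _ _ hp hz1.
have [b0 b1 b2 bp] := @prim_facts _ _ _ hq hz2.
have [c0 c1 c2 cp] := @prim_facts _ _ _ hr hz3.
rewrite (@pow13 K z2 l m (2 + z1 + z1^-1) q1 b0 b1 b2 bp).
rewrite (@pow12 K z1 l m (2 + z2 + z2^-1) p1 a0 a1 a2 ap).
rewrite (@pow23 K z3 l m (2 + z1 + z1^-1) (2 + z2 + z2^-1) r1 hlm c0 c1 c2 cp).
apply: (@final K).
- exact: four_ne.
- exact: four_ne.
- by rewrite hlm four_ne.
- by rewrite hlm.
Qed.
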